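(* For $n\ge2$, the group $VSPG_n$ is representable as the semi-direct product $VSPG_n=VS_{n-1}^*\rtimes VSPG_{n-1}=VS_{n-1}^*\rtimes\big(VS_{n-2}^*\rtimes(\cdots\rtimes(VS_2^*\rtimes VS_1^* )\cdots)\big)$, where $VS_{k-1}^*$, for $3\le k\le n$, are infinitely generated subgroups of $VSPG_n$, and $VS_1^*$ is a subgroup of rank $4$ (generated by $\mu_{12},\mu_{21},\gamma_{12},\gamma_{21}$).
   Context: $VSPG_n$ is the group generated by $\{\mu_{ij},\gamma_{ij}\mid 1\le i\ne j\le n\}$ with defining relations (distinct letters denote distinct indices): $\mu_{ij}\mu_{ik}\mu_{jk}=\mu_{jk}\mu_{ik}\mu_{ij}$; $\mu_{ij}\mu_{ik}\gamma_{jk}=\gamma_{jk}\mu_{ik}\mu_{ij}$; $\gamma_{ij}\mu_{ik}\mu_{jk}=\mu_{jk}\mu_{ik}\gamma_{ij}$; $\mu_{ij}\gamma_{ji}=\gamma_{ij}\mu_{ji}$; $\mu_{ij}\mu_{kl}=\mu_{kl}\mu_{ij}$, $\gamma_{ij}\gamma_{kl}=\gamma_{kl}\gamma_{ij}$, $\mu_{ij}\gamma_{kl}=\gamma_{kl}\mu_{ij}$ (the virtual singular pure braid group, i.e. the kernel of the permutation homomorphism on the virtual singular braid group $VSG_n$). For $k<n$, $VSPG_k$ is identified with the subgroup of $VSPG_n$ generated by $\mu_{ij},\gamma_{ij}$ with $i,j\le k$. For $2\le i\le n$, $VS_{i-1}$ is the subgroup generated by $\mu_{1i},\dots,\mu_{i-1,i},\mu_{i1},\dots,\mu_{i,i-1},\gamma_{1i},\dots,\gamma_{i-1,i},\gamma_{i1},\dots,\gamma_{i,i-1}$,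 and $VS_{i-1}^*$ is the normal closure of $VS_{i-1}$ in $VSPG_i$; $VSPG_2=VS_1=VS_1^*$. *)

(* Defs.v *)
(* The group VSPG_n is given by its presentation:
   elements are words over signed letters modulo the congruence generated by
   free cancellation and the defining relations of VSPG_n. *)
From mathcomp Require Import all_boot.
Set Implicit Arguments. Unset Strict Implicit. Unset Printing Implicit Defensive.

(* a letter (b, i, j): b = true is mu_ij, b = false is gamma_ij (indices 1-based) *)
Definition letter := (bool * nat * nat)%type.
(* a signed letter (e, x): e = true is x, e = false is x^-1 *)
Definition sletter := (bool * letter)%type.
Definition word := seq sletter.

Definition inv_letter (x : sletter) : sletter := (~~ x.1, x.2).
Definition inv_word (w : word) : word := rev (map inv_letter w).

Definition gen (b : bool) (i j : nat) : word := [:: (true, (b, i, j))].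
Definition mu (i j : nat) : word := gen true i j.
Definition ga (i j : nat) : word := gen false i j.

Definition idx_ok (n i : nat) : bool := (1 <= i <= n).

Inductive vspg_rel (n : nat) : word -> word -> Prop :=
| R_mmm i j k : all (idx_ok n) [:: i; j; k] -> uniq [:: i; j; k] ->
    vspg_rel n (mu i j ++ mu i k ++ mu j k) (mu j k ++ mu i k ++ mu i j)
| R_mmg i j k : all (idx_ok n) [:: i; j; k] -> uniq [:: i; j; k] ->
    vspg_rel n (mu i j ++ mu i k ++ ga j k) (ga j k ++ mu i k ++ mu i j)
| R_gmm i j k : all (idx_ok n) [:: i; j; k] -> uniq [:: i; j; k] ->
    vspg_rel n (ga i j ++ mu i k ++ mu j k) (mu j k ++ mu i k ++ ga i j)
| R_mg i j : all (idx_ok n) [:: i; j] -> uniq [:: i; j] ->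
    vspg_rel n (mu i j ++ ga j i) (ga i j ++ mu j i)
| R_mm i j k l : all (idx_ok n) [:: i; j; k; l] -> uniq [:: i; j; k; l] ->
    vspg_rel n (mu i j ++ mu k l) (mu k l ++ mu i j)
| R_gg i j k l : all (idx_ok n) [:: i; j; k; l] -> uniq [:: i; j; k; l] ->
    vspg_rel n (ga i j ++ ga k l) (ga k l ++ ga i j)
| R_mg4 i j k l : all (idx_ok n) [:: i; j; k; l] -> uniq [:: i; j; k; l] ->
    vspg_rel n (mu i j ++ ga k l) (ga k l ++ mu i j).

Inductive eqv (n : nat) : word -> word -> Prop :=
| eqv_refl w : eqv n w w
| eqv_sym u v : eqv n u v -> eqv n v u
| eqv_trans u v w : eqv n u v -> eqv n v w -> eqv n u w
| eqv_ctx a b u v : eqv n u v -> eqv n (a ++ u ++ b) (a ++ v ++ b)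
| eqv_free x : eqv n [:: x; inv_letter x] [::]
| eqv_rel u v : vspg_rel n u v -> eqv n u v.

Inductive span (n : nat) (S : word -> Prop) : word -> Prop :=
| span_nil : span n S [::]
| span_cons s w : S s -> span n S w -> span n S (s ++ w)
| span_inv s w : S s -> span n S w -> span n S (inv_word s ++ w)
| span_eqv w w' : span n S w -> eqv n w w' -> span n S w'.

Definition VSPG_gen (k : nat) (w : word) : Prop :=
  exists b i j, [/\ idx_ok k i, idx_ok k j, i != j & w = gen b i j].

Definition VSPG (n k : nat) : word -> Prop := span n (VSPG_gen k).

(* generators of VS_m (m = i - 1): mu_{l,i}, mu_{i,l}, gamma_{l,i}, gamma_{i,l}, 1 <= l <= m *)
Definition VS_gen (m : nat) (w : word) : Prop :=
  exists b l, 1 <= l <= m /\ (w = gen b l m.+1 \/ w = gen b m.+1 l).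

(* VS_m^* = normal closure of VS_m in VSPG_{m+1}, viewed inside VSPG_n:
   generated by conjugates g s g^-1, g in VSPG_{m+1}, s a generator of VS_m *)
Definition VSstar_gen (n m : nat) (w : word) : Prop :=
  exists g s, [/\ VSPG n m.+1 g, VS_gen m s & w = g ++ s ++ inv_word g].

Definition VSstar (n m : nat) : word -> Prop := span n (VSstar_gen n m).

Definition semidirect (n : nat) (G N H : word -> Prop) : Prop :=
  [/\ (forall x, N x -> G x),
      (forall h, H h -> G h),
      (forall g x, G g -> N x -> N (g ++ x ++ inv_word g)),
      (forall x, N x -> H x -> eqv n x [::] )
    & (forall g, G g -> exists x h, [/\ N x, H h & eqv n g (x ++ h)])].

Definition fin_gen (n : nat) (N : word -> Prop) : Prop :=
  exists S : seq word, (forall s, s \in S -> N s) /\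
    (forall w, N w -> span n (fun s => s \in S) w).

(* Main.v *)
Require Import Defs.
From mathcomp Require Import all_boot zify.
From Stdlib Require Import ZArith Lia FunctionalExtensionality.
Set Implicit Arguments. Unset Strict Implicit. Unset Printing Implicit Defensive.

Section Gen.
Variable n : nat.

Lemma eqv_cat u u' v v' : eqv n u u' -> eqv n v v' -> eqv n (u ++ v) (u' ++ v').
Proof.
move=> Hu Hv; apply: (eqv_trans (v := u' ++ v)).
  by have := eqv_ctx [::] v Hu.
by have := eqv_ctx u' [::] Hv; rewrite !cats0.
Qed.

Lemma inv_letterK : involutive inv_letter.
Proof. by case=> e x; rewrite /inv_letter /= negbK. Qed.

Lemma inv_wordK : involutive inv_word.
Proof. by move=> w; rewrite /inv_word map_rev revK -map_comp (eq_map inv_letterK) map_id. Qed.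

Lemma inv_word_cat u v : inv_word (u ++ v) = inv_word v ++ inv_word u.
Proof. by rewrite /inv_word map_cat rev_cat. Qed.

Lemma inv_word_cons x w : inv_word (x :: w) = inv_word w ++ [:: inv_letter x].
Proof. by rewrite /inv_word /= rev_cons cats1. Qed.

Lemma eqv_wV w : eqv n (w ++ inv_word w) [::].
Proof.
elim: w => [|x w IH] /=; first exact: eqv_refl.
rewrite inv_word_cons catA.
apply: (eqv_trans (v := [:: x] ++ [::] ++ [:: inv_letter x])).
  exact: (eqv_ctx [:: x] [:: inv_letter x] IH).
exact: eqv_free.
Qed.

Lemma eqv_Vw w : eqv n (inv_word w ++ w) [::].
Proof. by have := eqv_wV (inv_word w); rewrite inv_wordK. Qed.

Lemma eqv_inv u v : eqv n u v -> eqv n (inv_word u) (inv_word v).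
Proof.
move=> H.
apply: (eqv_trans (v := inv_word u ++ (v ++ inv_word v))).
  have := eqv_cat (eqv_refl n (inv_word u)) (eqv_sym (eqv_wV v)).
  by rewrite cats0.
apply: (eqv_trans (v := (inv_word u ++ u) ++ inv_word v)).
  rewrite -catA; apply: eqv_cat; first exact: eqv_refl.
  apply: eqv_cat; [exact: eqv_sym | exact: eqv_refl].
have := eqv_cat (eqv_Vw u) (eqv_refl n (inv_word v)); done.
Qed.

Variable S : word -> Prop.

Lemma span_app u v : span n S u -> span n S v -> span n S (u ++ v).
Proof.
move=> Hu Hv; elim: Hu => {u} [|s w Hs _ IH|s w Hs _ IH|w w' _ IH Hw] //.
- by rewrite -catA; apply: span_cons.
- by rewrite -catA; apply: span_inv.
- apply: span_eqv IH _; apply: eqv_cat => //; exact: eqv_refl.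
Qed.

Lemma span_gen s : S s -> span n S s.
Proof. by move=> Hs; have := span_cons Hs (span_nil n S); rewrite cats0. Qed.

Lemma span_invg s : S s -> span n S (inv_word s).
Proof. by move=> Hs; have := span_inv Hs (span_nil n S); rewrite cats0. Qed.

Lemma span_invw w : span n S w -> span n S (inv_word w).
Proof.
elim=> {w} [|s w Hs _ IH|s w Hs _ IH|w w' _ IH Hw].
- exact: span_nil.
- by rewrite inv_word_cat; apply: span_app IH (span_invg Hs).
- by rewrite inv_word_cat inv_wordK; apply: span_app IH (span_gen Hs).
- by apply: span_eqv IH _; apply: eqv_inv.
Qed.
End Gen.

Lemma span_mono n (S T : word -> Prop) w :
  (forall s, S s -> span n T s) -> span n S w -> span n T w.
Proof.
move=> ST; elim=> {w} [|s w Hs _ IH|s w Hs _ IH|w w' _ IH Hw].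
- exact: span_nil.
- exact: span_app (ST _ Hs) IH.
- exact: span_app (span_invw (ST _ Hs)) IH.
- exact: span_eqv IH Hw.
Qed.

Definition ZF := ((Z -> Z) * Z)%type.
Definition zeroF : ZF := (fun _ => 0%Z, 0%Z).
Definition comb (a b : ZF) : ZF :=
  (fun d => (a.1 d + b.1 (d - a.2)%Z)%Z, (a.2 + b.2)%Z).

Lemma comb0l a : comb zeroF a = a.
Proof.
case: a => f m; rewrite /comb /=; f_equal.
apply: functional_extensionality => d; by rewrite Z.sub_0_r.
Qed.

Lemma comb0r a : comb a zeroF = a.
Proof.
case: a => f m; rewrite /comb /=; f_equal; last by rewrite Z.add_0_r.
apply: functional_extensionality => d; by rewrite Z.add_0_r.
Qed.

Lemma combA a b c : comb (comb a b) c = comb a (comb b c).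
Proof.
case: a => fa ma; case: b => fb mb; case: c => fc mc; rewrite /comb /=; f_equal; last by lia.
apply: functional_extensionality => d; rewrite Z.sub_add_distr; lia.
Qed.

Definition sgnZ (e : bool) : Z := if e then 1%Z else (-1)%Z.

Definition cls (k : nat) (x : letter) : nat :=
  let: (b, i, j) := x in
  if b then 0 else
  if ((i == 1) && (j == 2)) || ((i == 2) && (j == 1)) then 1 else
  if ((i == 1) && (j == k)) || ((i == k) && (j == 1)) then 2 else 0.

Definition ev1 (k : nat) (x : sletter) : ZF :=
  match cls k x.2 with
  | 1 => (fun _ => 0%Z, sgnZ x.1)
  | 2 => (fun d => if Z.eqb d 0 then sgnZ x.1 else 0%Z, 0%Z)
  | _ => zeroF
  end.

Definition ev k (w : word) : ZF := foldr (fun x acc => comb (ev1 k x) acc) zeroF w.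

Section Ev.
Variable k : nat.

Lemma ev_cat u v : ev k (u ++ v) = comb (ev k u) (ev k v).
Proof. elim: u => [|x u IH] /=; first by rewrite comb0l. by rewrite IH combA. Qed.

Lemma ev_single x : ev k [:: x] = ev1 k x.
Proof. by rewrite /= comb0r. Qed.

Lemma cls_sym b i j : cls k (b, i, j) = cls k (b, j, i).
Proof.
rewrite /=; case: b => //.
have -> : ((i == 1) && (j == 2)) || ((i == 2) && (j == 1)) =
          ((j == 1) && (i == 2)) || ((j == 2) && (i == 1)).
  by case: (i == 1); case: (j == 2); case: (i == 2); case: (j == 1).
have -> : ((i == 1) && (j == k)) || ((i == k) && (j == 1)) =
          ((j == 1) && (i == k)) || ((j == k) && (i == 1)).
  by case: (i == 1); case: (j == k); case: (i == k); case: (j == 1).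
done.
Qed.

Lemma cls_one b i j : cls k (b, i, j) != 0 -> (i == 1) || (j == 1).
Proof.
rewrite /=; case: b => //.
case: (i =P 1) => //= _; case: (j =P 1) => //= _.
by rewrite !andbF /=.
Qed.

Lemma ev1_cls0 x : cls k x.2 = 0 -> ev1 k x = zeroF.
Proof. by rewrite /ev1 => ->. Qed.

Lemma ev1_mu e i j : ev1 k (e, (true, i, j)) = zeroF.
Proof. by []. Qed.

Lemma ev1_swap e i j : ev1 k (e, (false, i, j)) = ev1 k (e, (false, j, i)).
Proof. by rewrite /ev1 (cls_sym false i j). Qed.

Lemma ev_rel n u v : vspg_rel n u v -> ev k u = ev k v.
Proof.
case=> {u v}.
- move=> i j l _ _; by rewrite /= !comb0l.
- move=> i j l _ _; by rewrite /= !comb0l !comb0r.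
- move=> i j l _ _; by rewrite /= !comb0l !comb0r.
- move=> i j _ _; rewrite /= !comb0l !comb0r; exact: ev1_swap.
- move=> i j l m _ _; by rewrite /= !comb0l.
- move=> i j l m _ U; rewrite /= !comb0r.
  case E1: (cls k (false, i, j) == 0).
    by rewrite (@ev1_cls0 (true,(false,i,j)) (eqP E1)) comb0l comb0r.
  case E2: (cls k (false, l, m) == 0).
    by rewrite (@ev1_cls0 (true,(false,l,m)) (eqP E2)) comb0l comb0r.
  move: (cls_one (negbT E1)) (cls_one (negbT E2)) U.
  by case/orP=> /eqP->; case/orP=> /eqP->; rewrite /= !inE ?eqxx ?orbT //= ?andbF.
- move=> i j l m _ _; by rewrite /= !comb0l !comb0r.
Qed.

Lemma ev_free x : ev k [:: x; inv_letter x] = zeroF.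
Proof.
rewrite /= comb0r /ev1 /inv_letter /=.
case: (cls k x.2) => [|[|[|c]]]; rewrite ?comb0l //; case: x.1; rewrite /comb /= /zeroF; f_equal;
  try (apply: functional_extensionality => d; rewrite ?Z.sub_0_r; case: (Z.eqb d 0)); lia.
Qed.

Lemma ev_eqv n u v : eqv n u v -> ev k u = ev k v.
Proof.
elim=> {u v} //.
- by move=> u v w _ -> _ ->.
- by move=> a b u v _ IH; rewrite !ev_cat IH.
- by move=> x; rewrite ev_free.
- by move=> u v; apply: ev_rel.
Qed.
End Ev.

Section Part2.
Variables (n m : nat).
Hypothesis hm : 1 < m.
Let k := m.+1.

Lemma ev1_props x : (forall d, d <> 0%Z -> (ev1 k x).1 d = 0%Z) /\
   (-1 <= (ev1 k x).2 <= 1)%Z.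
Proof.
rewrite /ev1; case: (cls k x.2) => [|[|[|c]]] /=; split => //; try lia.
- case: x.1 => /=; lia.
- move=> d /Z.eqb_neq ->; done.
Qed.

Lemma ev_supp w d : (Z.of_nat (size w) < d)%Z -> (ev k w).1 d = 0%Z.
Proof.
elim: w d => [|x w IH] d /=; first by [].
move=> Hd; case: (ev1_props x) => H1 H2.
rewrite H1; last lia.
rewrite IH; lia.
Qed.

Lemma ev_inv w : (ev k (inv_word w)).2 = (- (ev k w).2)%Z /\
  forall d, (ev k (inv_word w)).1 (d - (ev k w).2)%Z = (- (ev k w).1 d)%Z.
Proof.
have := ev_eqv k (eqv_wV n w); rewrite ev_cat /comb /zeroF => E.
have E2 := f_equal snd E; have E1 := f_equal fst E; simpl in E1, E2.
split; first lia.
move=> d; have := equal_f E1 d; lia.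
Qed.

Lemma ev1_m0 e b i j : (i = k \/ j = k) -> (ev1 k (e, (b, i, j))).2 = 0%Z.
Proof.
move=> Hij; rewrite /ev1 /=; case: b => //=.
case: ifP => [/orP[]/andP[]/eqP Hi /eqP Hj|_]; first (exfalso; rewrite /k in Hij; lia).
  exfalso; rewrite /k in Hij; lia.
by case: ifP.
Qed.

Lemma N_m0 w : VSstar n m w -> (ev k w).2 = 0%Z.
Proof.
elim=> {w} [|s w Hs _ IH|s w Hs _ IH|w w' _ IH Hw] //.
- rewrite ev_cat /= IH; case: Hs => g [s0 [_ [b [l [_ Hs0]]] ->]].
  rewrite !ev_cat /= (proj1 (ev_inv g)).
  suff -> : (ev k s0).2 = 0%Z by lia.
  by case: Hs0 => ->; rewrite ev_single ev1_m0; auto.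
- rewrite ev_cat /= IH (proj1 (ev_inv s)); case: Hs => g [s0 [_ [b [l [_ Hs0]]] ->]].
  rewrite !ev_cat /= (proj1 (ev_inv g)).
  suff -> : (ev k s0).2 = 0%Z by lia.
  by case: Hs0 => ->; rewrite ev_single ev1_m0; auto.
- by rewrite -(ev_eqv k Hw).
Qed.

Lemma size_le_sumn (S : seq word) s : s \in S -> size s <= sumn (map size S).
Proof.
elim: S => [|t S IH] //=; rewrite inE; case/orP=> [/eqP->|/IH H]; [exact: leq_addr | exact: leq_trans H (leq_addl _ _)].
Qed.

Definition tl := (true, (false, 1, 2)) : sletter.

Lemma ev_nseq p : (ev k (nseq p tl)).2 = Z.of_nat p /\ forall d, (ev k (nseq p tl)).1 d = 0%Z.
Proof.
elim: p => [|p [IH1 IH2]]; first done.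
have -> : ev k (nseq p.+1 tl) = comb (fun _ => 0%Z, 1%Z) (ev k (nseq p tl)) by [].
move: IH1 IH2; case: (ev k (nseq p tl)) => f0 m0 IH1 IH2; cbn [fst snd] in IH1, IH2.
rewrite /comb; cbn [fst snd]; split; first lia.
by move=> d; rewrite IH2.
Qed.

Lemma span_nseq p : VSPG n k (nseq p tl).
Proof.
elim: p => [|p IH]; first exact: span_nil.
have := @span_cons n (VSPG_gen k) [:: tl] _ _ IH; apply.
exists false, 1, 2; split => //; rewrite /idx_ok /k; lia.
Qed.

Lemma cls_E : cls k (false, 1, k) = 2.
Proof.
rewrite /= /k; have -> : (m.+1 == 2) = false by lia.
by rewrite eqxx.
Qed.

Lemma part2 : ~ fin_gen n (VSstar n m).
Proof.
case=> S [HSN HS].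
have [B HB] : {B | B = sumn (map size S)} by exists (sumn (map size S)).
pose P w := (ev k w).2 = 0%Z /\ forall d, (Z.of_nat B < d)%Z -> (ev k w).1 d = 0%Z.
have PS : forall s, s \in S -> P s.
  move=> s Hs; split; first exact: N_m0 (HSN _ Hs).
  move=> d Hd; apply: ev_supp.
  have H := size_le_sumn Hs; rewrite -HB in H; apply: Z.le_lt_trans Hd; apply/Nat2Z.inj_le/leP; exact: H.
have Pspan : forall w, span n (fun s => s \in S) w -> P w.
  move=> w; elim=> {w} [|s w Hs _ [IH1 IH2]|s w Hs _ [IH1 IH2]|w w' _ IH Hw].
  - by split.
  - case: (PS _ Hs) => H1 H2; rewrite /P ev_cat /=; split; first lia.
    move=> d Hd; rewrite H2 // H1 Z.sub_0_r IH2 //.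
  - case: (PS _ Hs) => H1 H2; case: (ev_inv s) => J1 J2.
    rewrite /P ev_cat /= J1 H1 IH1; split; first lia.
    move=> d Hd; rewrite Z.sub_0_r IH2 //.
    have := J2 d; rewrite H1 Z.sub_0_r H2 //; lia.
  - by rewrite /P -(ev_eqv k Hw).
have [g Hg] : {g | g = nseq B.+1 tl} by exists (nseq B.+1 tl).
have G1 : (ev k g).2 = Z.of_nat B.+1 by rewrite Hg; exact: (proj1 (ev_nseq _)).
have G2 : forall d, (ev k g).1 d = 0%Z by rewrite Hg; exact: (proj2 (ev_nseq _)).
have Nw0 : VSstar n m (g ++ ga 1 k ++ inv_word g).
  apply: span_gen; exists g, (ga 1 k); split => //; first by rewrite Hg; exact: span_nseq.
  exists false, 1; split; [lia | by left].
have [_ H] := Pspan _ (HS _ Nw0).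
have E : ev k (g ++ ga 1 k ++ inv_word g) =
   comb (ev k g) (comb (ev1 k (true,(false,1,k))) (ev k (inv_word g))).
  by rewrite !ev_cat ev_single.
have E1 : ev1 k (true, (false, 1, k)) = (fun d => if Z.eqb d 0 then 1%Z else 0%Z, 0%Z).
  by rewrite /ev1 cls_E.
case: (ev_inv g) => J1 J2.
have J : (ev k (inv_word g)).1 0%Z = 0%Z.
  by have := J2 (Z.of_nat B.+1); rewrite G1 Z.sub_diag G2.
move: (H (Z.of_nat B.+1) ltac:(lia)); rewrite E E1 /comb; cbn [fst snd].
rewrite G1 G2 Z.sub_diag Z.sub_0_r J /=; done.
Qed.
End Part2.

Section Del.
Variable k : nat.
Definition keep (x : sletter) : bool := (x.2.1.2 != k) && (x.2.2 != k).
Definition del (w : word) : word := filter keep w.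

Lemma del_cat u v : del (u ++ v) = del u ++ del v.
Proof. exact: filter_cat. Qed.

Lemma del_inv w : del (inv_word w) = inv_word (del w).
Proof.
rewrite /del /inv_word filter_rev filter_map; congr (rev (map _ _)).
Qed.

Ltac cs i := case: (eqVneq i k) => [->|?].

Lemma del_rel n u v : vspg_rel n u v -> (del u = u /\ del v = v) \/ del u = del v.
Proof.
case=> {u v}.
- move=> i j l _ _; rewrite /del /= /keep /=.
  cs i; cs j; cs l; rewrite ?eqxx /= ?andbF ?andbT; simpl; (try by right); try rewrite !ifT //; by left.
- move=> i j l _ _; rewrite /del /= /keep /=.
  cs i; cs j; cs l; rewrite ?eqxx /= ?andbF ?andbT; simpl; (try by right); try rewrite !ifT //; by left.
- move=> i j l _ _; rewrite /del /= /keep /=.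
  cs i; cs j; cs l; rewrite ?eqxx /= ?andbF ?andbT; simpl; (try by right); try rewrite !ifT //; by left.
- move=> i j _ _; rewrite /del /= /keep /=.
  cs i; cs j; rewrite ?eqxx /= ?andbF ?andbT; simpl; (try by right); try rewrite !ifT //; by left.
- move=> i j l p _ _; rewrite /del /= /keep /=.
  cs i; cs j; cs l; cs p; rewrite ?eqxx /= ?andbF ?andbT; simpl; (try by right); try rewrite !ifT //; by left.
- move=> i j l p _ _; rewrite /del /= /keep /=.
  cs i; cs j; cs l; cs p; rewrite ?eqxx /= ?andbF ?andbT; simpl; (try by right); try rewrite !ifT //; by left.
- move=> i j l p _ _; rewrite /del /= /keep /=.
  cs i; cs j; cs l; cs p; rewrite ?eqxx /= ?andbF ?andbT; simpl; (try by right); try rewrite !ifT //; by left.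
Qed.

Lemma del_eqv n u v : eqv n u v -> eqv n (del u) (del v).
Proof.
elim=> {u v}.
- move=> w; exact: eqv_refl.
- move=> u v _ IH; exact: eqv_sym.
- move=> u v w _ H1 _ H2; exact: eqv_trans H1 H2.
- move=> a b u v _ IH; rewrite !del_cat; exact: eqv_ctx.
- move=> x; rewrite /del /=.
  have -> : keep (inv_letter x) = keep x by [].
  case: (keep x); [exact: eqv_free | exact: eqv_refl].
- move=> u v H; case: (del_rel H) => [[-> ->]|->]; [exact: eqv_rel | exact: eqv_refl].
Qed.
End Del.

Section Semi.
Variables n m : nat.

Lemma VS_in_G s : VS_gen m s -> VSPG_gen m.+1 s.
Proof.
case=> b [l [Hl [->|->]]]; exists b.
- exists l, m.+1; split => //; rewrite /idx_ok; lia.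
- exists m.+1, l; split => //; rewrite /idx_ok; lia.
Qed.

Lemma H_in_G s : VSPG_gen m s -> VSPG_gen m.+1 s.
Proof. case=> b [i [j [Hi Hj Hij ->]]]; exists b, i, j; split => //; move: Hi Hj; rewrite /idx_ok; lia. Qed.

Lemma classify s : VSPG_gen m.+1 s -> VS_gen m s \/ VSPG_gen m s.
Proof.
case=> b [i [j [Hi Hj Hij ->]]].
case: (eqVneq i m.+1) => [Ei|Ei].
  left; exists b, j; split; last by right; rewrite Ei.
  move: Hj Hij; rewrite /idx_ok Ei; lia.
case: (eqVneq j m.+1) => [Ej|Ej].
  left; exists b, i; split; last by left; rewrite Ej.
  move: Hi Hij; rewrite /idx_ok Ej; lia.
right; exists b, i, j; split => //; move: Hi Hj Ei Ej; rewrite /idx_ok; lia.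
Qed.

Lemma N_sub_G x : VSstar n m x -> VSPG n m.+1 x.
Proof.
rewrite /VSstar /VSPG; apply: span_mono => s [g [s0 [Hg Hs0 ->]]].
exact: (span_app Hg (span_app (span_gen _ (VS_in_G Hs0)) (span_invw Hg))).

Qed.

Lemma H_sub_G x : VSPG n m x -> VSPG n m.+1 x.
Proof. apply: span_mono => s Hs; exact: span_gen _ (H_in_G Hs). Qed.

Lemma conj_gen g s : VSPG n m.+1 g -> VSstar_gen n m s ->
  VSstar_gen n m (g ++ s ++ inv_word g).
Proof.
move=> Hg [g0 [s0 [Hg0 Hs0 ->]]]; exists (g ++ g0), s0; split => //.
  exact: span_app.
by rewrite inv_word_cat !catA.
Qed.

Lemma eqv_mid g s w : eqv n ((g ++ s ++ inv_word g) ++ g ++ w ++ inv_word g)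
                             (g ++ (s ++ w) ++ inv_word g).
Proof.
have := eqv_ctx (n := n) (g ++ s) (w ++ inv_word g) (eqv_Vw n g).
by rewrite cat0s !catA.
Qed.

Lemma normal g x : VSPG n m.+1 g -> VSstar n m x -> VSstar n m (g ++ x ++ inv_word g).
Proof.
move=> Hg; elim=> {x} [|s w Hs _ IH|s w Hs _ IH|w w' _ IH Hw].
- apply: span_eqv (span_nil _ _) _; apply: eqv_sym; exact: eqv_wV.
- apply: span_eqv (eqv_mid _ _ _); apply: span_cons IH; exact: conj_gen.
- apply: span_eqv (eqv_mid _ _ _).
  have := span_inv (conj_gen Hg Hs) IH.
  by rewrite !inv_word_cat inv_wordK !catA.
- apply: span_eqv IH _; exact: eqv_ctx.
Qed.

Lemma N_del x : VSstar n m x -> eqv n (del m.+1 x) [::].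
Proof.
have gen0 : forall s, VSstar_gen n m s -> eqv n (del m.+1 s) [::].
  move=> s [g [s0 [_ [b [l [Hl Hs0]]] ->]]].
  rewrite !del_cat; have -> : del m.+1 s0 = [::].
    by case: Hs0 => ->; rewrite /del /= /keep /= eqxx ?andbF.
  rewrite del_inv /=; exact: eqv_wV.
elim=> {x} [|s w Hs _ IH|s w Hs _ IH|w w' _ IH Hw].
- exact: eqv_refl.
- rewrite del_cat; exact: (eqv_cat (gen0 _ Hs) IH).
- rewrite del_cat del_inv; exact: (eqv_cat (eqv_inv (gen0 _ Hs)) IH).

- apply: eqv_trans IH; apply: eqv_sym; exact: del_eqv.
Qed.

Lemma H_del x : VSPG n m x -> eqv n (del m.+1 x) x.
Proof.
have gen0 : forall s, VSPG_gen m s -> del m.+1 s = s.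
  move=> s [b [i [j [Hi Hj _ ->]]]]; move: Hi Hj; rewrite /idx_ok /del /= /keep /= => Hi Hj.
  have -> : (i != m.+1) by lia.
  by have -> : (j != m.+1) by lia.
elim=> {x} [|s w Hs _ IH|s w Hs _ IH|w w' _ IH Hw].
- exact: eqv_refl.
- rewrite del_cat gen0 //; exact: (eqv_cat (eqv_refl _ _) IH).
- rewrite del_cat del_inv gen0 //; exact: (eqv_cat (eqv_refl _ _) IH).
- exact: (eqv_trans (eqv_trans (eqv_sym (del_eqv (m.+1) Hw)) IH) Hw).
Qed.

Lemma semi : semidirect n (VSPG n m.+1) (VSstar n m) (VSPG n m).
Proof.
split.
- exact: N_sub_G.
- exact: H_sub_G.
- move=> g x Hg Hx; exact: normal.
- move=> x Hx Hh; apply: eqv_trans (N_del Hx); apply: eqv_sym; exact: H_del.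
- move=> g; elim=> {g} [|s w Hs Hw [x [h [Nx Hh E]]]|s w Hs Hw [x [h [Nx Hh E]]]|w w' _ [x [h [Nx Hh E]]] Hw].
  + exists [::], [::]; split; [exact: span_nil | exact: span_nil | exact: eqv_refl].
  + case: (classify Hs) => Hs'.
    * exists (s ++ x), h; split => //.
        apply: span_cons Nx; exists [::], s; split => //; [exact: span_nil | by rewrite cats0].
      by rewrite -catA; apply: eqv_cat (eqv_refl _ _) E.
    * exists (s ++ x ++ inv_word s), (s ++ h); split.
      - apply: normal Nx; exact: span_gen.
      - exact: span_cons.
      - apply: eqv_trans (eqv_cat (eqv_refl _ s) E) _.
        have := eqv_ctx (n := n) (s ++ x) h (eqv_sym (eqv_Vw n s)).
        by rewrite cat0s !catA.
  + case: (classify Hs) => Hs'.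
    * exists (inv_word s ++ x), h; split => //.
        apply: span_inv Nx; exists [::], s; split => //; [exact: span_nil | by rewrite cats0].
      by rewrite -catA; apply: eqv_cat (eqv_refl _ _) E.
    * exists (inv_word s ++ x ++ s), (inv_word s ++ h); split.
      - have := normal (span_invw (span_gen _ (H_in_G Hs'))) Nx; rewrite inv_wordK; exact.
      - exact: span_inv.
      - apply: eqv_trans (eqv_cat (eqv_refl _ (inv_word s)) E) _.
        have := eqv_ctx (n := n) (inv_word s ++ x) h (eqv_sym (eqv_wV n s)).
        by rewrite cat0s !catA.
  + exists x, h; split => //; apply: eqv_trans E; exact: eqv_sym.
Qed.
End Semi.

Definition L4 : seq word := [:: mu 1 2; mu 2 1; ga 1 2; ga 2 1].

Lemma gen2_L s : VSPG_gen 2 s -> s \in L4.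
Proof.
case=> b [i [j [Hi Hj Hij ->]]]; move: Hi Hj Hij; rewrite /idx_ok.
case: i => [|[|[|i]]] //; case: j => [|[|[|j]]] //; by case: b.
Qed.

Lemma VS1_L s : VS_gen 1 s -> s \in L4.
Proof.
case=> b [l [Hl Hs]]; have El : l = 1 by lia.
by subst l; case: Hs => ->; case: b.
Qed.

Lemma L_VS1 s : s \in L4 -> VS_gen 1 s.
Proof.
rewrite !inE => /or4P[] /eqP->.
- by exists true, 1; split => //; left.
- by exists true, 1; split => //; right.
- by exists false, 1; split => //; left.
- by exists false, 1; split => //; right.
Qed.

Lemma part3 n w : VSstar n 1 w <-> span n (fun s => s \in L4) w.
Proof.
split.
- apply: span_mono => s [g [s0 [Hg Hs0 ->]]].
  have Hg' : span n (fun s => s \in L4) g.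
    by apply: span_mono Hg => t Ht; apply: span_gen; exact: gen2_L.
  apply: (span_app Hg'); apply: span_app; first by apply: span_gen; exact: VS1_L.
  exact: span_invw.
- apply: span_mono => s Hs; apply: span_gen; exists [::], s; split.
  + exact: span_nil.
  + exact: L_VS1.
  + by rewrite /= cats0.
Qed.

Theorem mainTheorem12 (n : nat) : 2 <= n ->
  (forall k, 2 <= k <= n ->
     semidirect n (VSPG n k) (VSstar n k.-1) (VSPG n k.-1)) /\
  (forall k, 3 <= k <= n -> ~ fin_gen n (VSstar n k.-1)) /\
  (forall w, VSstar n 1 w <->
     span n (fun s => s \in [:: mu 1 2; mu 2 1; ga 1 2; ga 2 1]) w).
Proof.
move=> _; split; last split.
- case=> [|m] // _; exact: semi.
- case=> [|m] Hk //; apply: part2; lia.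
- exact: part3.
Qed.
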